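(* Let $(G,\ell,\mathcal{C})$ be a triplet and let $C_1,C_2,\ldots,C_{q+1}\subseteq V(G)$ be pairwise disjoint vertex sets which pairwise have the same type in $(G,\ell,\mathcal{C})$. Let $\phi$ be an FO formula in prenex form having $q$ quantifiers. Then $G,\ell,\mathcal{C}\models\phi$ if and only if $G\setminus C_1,\ell,\mathcal{C}'\models\phi$, where $\mathcal{C}'$ is the restriction of $\mathcal{C}$ to $V(G)\setminus C_1$.
   Context: Graphs are finite and simple. There are vertex constants $u_1,u_2,\ldots$ and set constants $D_1,D_2,\ldots$, vertex variables $x_1,x_2,\ldots$ and set variables $X_1,X_2,\ldots$. A triplet $(G,\ell,\mathcal{C})$ consists of a graph $G$, a partial function $\ell$ (labeling) from vertex constants to $V(G)$, and a partial function $\mathcal{C}$ (coloring) from set constants to subsets of $V(G)$. MSO formulas are generated by $\phi\to\exists X.\phi\mid\exists x.\phi\mid\phi\lor\phi\mid\neg\phi\mid y\sim y\mid y=y\mid y\in Y$, where $y$ is a vertex variable or vertex constant and $Y$ a set variable or set constant; an FO formula is an MSO formula using no set variables. Semantics: $G,\ell,\mathcal{C}\models u_i\in D_j$ iff $\ell(u_i)$ is defined and $\ell(u_i)\in\mathcal{C}(D_j)$ (with $\mathcal{C}(D_j)$ defined); $u_i=u_j$ iff both are defined and $\ell(u_i)=\ell(u_j)$; $u_i\sim u_j$ iff both defined and $\ell(u_i)\ell(u_j)\in E(G)$; $\lor,\neg$ as usual; $G,\ell,\mathcal{C}\models\exists x_i.\phi$ iff there is $v\in V(G)$ such that $G,\ell',\mathcal{C}\models\phi[x_i\setminus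 u_i]$, where $\ell(u_i)$ is undefined, $\phi[x_i\setminus u_i]$ replaces every occurrence of $x_i$ by $u_i$, and $\ell'$ agrees with $\ell$ except $\ell'(u_i)=v$; similarly $G,\ell,\mathcal{C}\models\exists X_i.\phi$ iff there is $S\subseteq V(G)$ such that $G,\ell,\mathcal{C}'\models\phi[X_i\setminus D_i]$ where $\mathcal{C}(D_i)$ is undefined and $\mathcal{C}'$ agrees with $\mathcal{C}$ except $\mathcal{C}'(D_i)=S$. Otherwise the formula is not satisfied. Prenex form: all quantifiers at the beginning. An isomorphism between triplets $(G_1,\ell_1,\mathcal{C}_1)$ and $(G_2,\ell_2,\mathcal{C}_2)$ is a bijection $f:V(G_1)\to V(G_2)$ preserving adjacency and non-adjacency such that for every $u_i$ either both $\ell_1(u_i),\ell_2(u_i)$ are undefined or $f(\ell_1(u_i))=\ell_2(u_i)$, and for every $D_i$ either both $\mathcal{C}_1(D_i),\mathcal{C}_2(D_i)$ are undefined or $f(\mathcal{C}_1(D_i))=\mathcal{C}_2(D_i)$. Two sets $C_1,C_2\subseteq V(G)$ have the same type in $(G,\ell,\mathcal{C})$ if there is an isomorphism $f$ from $(G,\ell,\mathcal{C})$ to itself mapping elements of $C_1$ to $C_2$, elements of $C_2$ to $C_1$, and every vertex of $V(G)\setminus(C_1\cup C_2)$ to itself. The restriction of $\mathcal{C}$ to $V(G)\setminus C_1$ is the coloring $\mathcal{C}'$ with $\mathcal{C}'(D_i)=\mathcal{C}(D_i)\setminus C_1$ whenever $\mathcal{C}(D_i)$ is defined, and undefined otherwise.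 *)

(* Defs.v *)
From mathcomp Require Import all_boot.
Set Implicit Arguments. Unset Strict Implicit. Unset Printing Implicit Defensive.

(* A finite simple graph: a finite vertex set inside an ambient finite type,
   with a symmetric irreflexive adjacency relation (only its restriction to
   the vertex set matters). *)
Record graph (T : finType) := Graph {
  verts : {set T};
  adj : rel T;
  adj_sym : symmetric adj;
  adj_irr : irreflexive adj }.

Definition gdel (T : finType) (G : graph T) (C : {set T}) : graph T :=
  @Graph T (verts G :\: C) (adj G) (@adj_sym T G) (@adj_irr T G).

(* labeling: partial function from vertex constants u_i (index i) to vertices;
   coloring: partial function from set constants D_i to vertex sets. *)
Definition labeling (T : finType) := nat -> option T.
Definition coloring (T : finType) := nat -> option {set T}.

Definition triplet_ok (T : finType) (G : graph T) (l : labeling T)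
  (c : coloring T) : Prop :=
  (forall i v, l i = Some v -> v \in verts G) /\
  (forall i S, c i = Some S -> S \subset verts G).

Inductive vterm := VVar of nat | VConst of nat.
Inductive sterm := SVar of nat | SConst of nat.

Inductive formula :=
| ExS of nat & formula
| ExV of nat & formula
| Or of formula & formula
| Neg of formula
| Adj of vterm & vterm
| Eqv of vterm & vterm
| Mem of vterm & sterm.

Definition vsub (i : nat) (y : vterm) : vterm :=
  match y with VVar j => if j == i then VConst i else y | _ => y end.
Fixpoint substV (i : nat) (phi : formula) : formula :=
  match phi with
  | ExS j p => ExS j (substV i p)
  | ExV j p => ExV j (substV i p)
  | Or p r => Or (substV i p) (substV i r)
  | Neg p => Neg (substV i p)
  | Adj a b => Adj (vsub i a) (vsub i b)
  | Eqv a b => Eqv (vsub i a) (vsub i b)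
  | Mem a Y => Mem (vsub i a) Y
  end.

Definition ssub (i : nat) (Y : sterm) : sterm :=
  match Y with SVar j => if j == i then SConst i else Y | _ => Y end.
Fixpoint substS (i : nat) (phi : formula) : formula :=
  match phi with
  | ExS j p => ExS j (substS i p)
  | ExV j p => ExV j (substS i p)
  | Or p r => Or (substS i p) (substS i r)
  | Neg p => Neg (substS i p)
  | Adj a b => Adj a b
  | Eqv a b => Eqv a b
  | Mem a Y => Mem a (ssub i Y)
  end.

Fixpoint fsize (phi : formula) : nat :=
  match phi with
  | ExS _ p | ExV _ p | Neg p => (fsize p).+1
  | Or p r => (fsize p + fsize r).+1
  | _ => 1
  end.

Definition upd {A : Type} (f : nat -> option A) (i : nat) (a : A) :=
  fun j => if j == i then Some a else f j.

(* Semantics, with fuel (substitution preserves fsize, so fuel = fsize phi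
   suffices); variables left free make atoms unsatisfied. *)
Fixpoint satn (n : nat) (T : finType) (G : graph T) (l : labeling T)
  (c : coloring T) (phi : formula) {struct n} : Prop :=
  match n with
  | 0 => False
  | n'.+1 =>
    match phi with
    | ExS i p => c i = None /\
        exists S : {set T}, S \subset verts G /\ satn n' G l (upd c i S) (substS i p)
    | ExV i p => l i = None /\
        exists v, v \in verts G /\ satn n' G (upd l i v) c (substV i p)
    | Or p r => satn n' G l c p \/ satn n' G l c r
    | Neg p => ~ satn n' G l c p
    | Adj (VConst i) (VConst j) =>
        exists a b, l i = Some a /\ l j = Some b /\ adj G a b
    | Eqv (VConst i) (VConst j) =>
        exists a b, l i = Some a /\ l j = Some b /\ a = b
    | Mem (VConst i) (SConst j) =>
        exists a S, l i = Some a /\ c j = Some S /\ a \in S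
    | _ => False
    end
  end.

Definition models (T : finType) (G : graph T) (l : labeling T) (c : coloring T)
  (phi : formula) : Prop := satn (fsize phi) G l c phi.

Fixpoint qfree (phi : formula) : bool :=
  match phi with
  | ExS _ _ | ExV _ _ => false
  | Or p r => qfree p && qfree r
  | Neg p => qfree p
  | _ => true
  end.

Fixpoint prenex (phi : formula) : bool :=
  match phi with
  | ExS _ p | ExV _ p => prenex p
  | _ => qfree phi
  end.

Fixpoint nquant (phi : formula) : nat :=
  match phi with
  | ExS _ p | ExV _ p => (nquant p).+1
  | Or p r => nquant p + nquant r
  | Neg p => nquant p
  | _ => 0
  end.

Fixpoint is_FO (phi : formula) : bool :=
  match phi with
  | ExS _ _ => false
  | ExV _ p | Neg p => is_FO p
  | Or p r => is_FO p && is_FO r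
  | Mem _ (SVar _) => false
  | _ => true
  end.

Definition triplet_iso (T1 T2 : finType) (G1 : graph T1) (l1 : labeling T1)
  (c1 : coloring T1) (G2 : graph T2) (l2 : labeling T2) (c2 : coloring T2)
  (f : T1 -> T2) : Prop :=
  {in verts G1 &, injective f} /\ f @: verts G1 = verts G2 /\
  {in verts G1 &, forall x y, adj G2 (f x) (f y) = adj G1 x y} /\
  (forall i, match l1 i, l2 i with
             | None, None => True
             | Some a, Some b => f a = b
             | _, _ => False end) /\
  (forall i, match c1 i, c2 i with
             | None, None => True
             | Some S1, Some S2 => f @: S1 = S2
             | _, _ => False end).

Definition same_type (T : finType) (G : graph T) (l : labeling T)
  (c : coloring T) (C1 C2 : {set T}) : Prop :=
  exists f : T -> T, triplet_iso G l c G l c f /\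
    {in C1, forall x, f x \in C2} /\ {in C2, forall x, f x \in C1} /\
    {in verts G :\: (C1 :|: C2), forall x, f x = x}.

Definition restrict_col (T : finType) (c : coloring T) (C1 : {set T}) : coloring T :=
  fun i => omap (fun S => S :\: C1) (c i).

(* Main.v *)
Require Import Defs.
From mathcomp Require Import all_boot zify.

Lemma fsize_substV i p : fsize (substV i p) = fsize p.
Proof. elim: p => /=; try (by move=> *; repeat match goal with H : _ = _ |- _ => rewrite H; clear H end); try (by move=> ? []); try (by move=> *; rewrite /= ?qfree_substV). Qed.
Lemma isFO_substV i p : is_FO (substV i p) = is_FO p.
Proof. elim: p => //=; try (by move=> *; repeat match goal with H : _ = _ |- _ => rewrite H; clear H end); by move=> ? []. Qed.
Lemma qfree_substV i p : qfree (substV i p) = qfree p.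
Proof. elim: p => /=; try (by move=> *; repeat match goal with H : _ = _ |- _ => rewrite H; clear H end); try (by move=> ? []); try (by move=> *; rewrite /= ?qfree_substV). Qed.
Lemma prenex_substV i p : prenex (substV i p) = prenex p.
Proof. elim: p => /=; try (by move=> *; repeat match goal with H : _ = _ |- _ => rewrite H; clear H end); try (by move=> ? []); try (by move=> *; rewrite /= ?qfree_substV). Qed.
Lemma nquant_substV i p : nquant (substV i p) = nquant p.
Proof. elim: p => /=; try (by move=> *; repeat match goal with H : _ = _ |- _ => rewrite H; clear H end); try (by move=> ? []); try (by move=> *; rewrite /= ?qfree_substV). Qed.
Lemma qfree_nquant p : qfree p -> nquant p = 0.
Proof. elim: p => //= [p IHp r IHr /andP[/IHp -> /IHr ->]] //. Qed.

Lemma models_ExV T (G : graph T) l c i p :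
  models G l c (ExV i p) <-> l i = None /\ exists v, v \in verts G /\ models G (upd l i v) c (substV i p).
Proof. by rewrite /models /= fsize_substV. Qed.

Lemma qf_del T (G : graph T) (C0 : {set T}) c phi : is_FO phi -> qfree phi ->
  forall n l, fsize phi <= n -> (forall i v, l i = Some v -> v \notin C0) ->
  (satn n G l c phi <-> satn n (gdel G C0) l (restrict_col c C0) phi).
Proof.
elim: phi => //= [p IHp r IHr /andP[Fp Fr] /andP[Qp Qr]|p IHp Fp Qp|a b _ _|a b _ _|a Y _ _]
  [|n] l //= Hn Hl.
- rewrite (IHp Fp Qp n l) ?(IHr Fr Qr n l) //; lia.
- rewrite (IHp Fp Qp n l) //.
case: a => // i; case: Y => // j; rewrite /restrict_col.
split.
- move=> [a [S [Ha [HS HaS]]]]; exists a, (S :\: C0); rewrite HS; split=> //; split=> //.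
  by rewrite in_setD HaS (Hl _ _ Ha).
- move=> [a [S [Ha [HS HaS]]]]; move: HS; case Hc: (c j) => [S0|] //= [HS]; subst S.
  exists a, S0; split=> //; split=> //; move: HaS; rewrite in_setD => /andP[].
  done.
Qed.

Lemma iso_upd T (G1 G2 : graph T) (l1 : labeling T) (c1 : coloring T) (l2 : labeling T) (c2 : coloring T) (f : T -> T) i v :
  triplet_iso G1 l1 c1 G2 l2 c2 f -> triplet_iso G1 (upd l1 i v) c1 G2 (upd l2 i (f v)) c2 f.
Proof.
move=> [H1 [H2 [H3 [H4 H5]]]]; do 4 split => //.
by move=> j; rewrite /upd; case: (j == i); [|apply: H4].
Qed.

Lemma iso_sat T (G1 G2 : graph T) (f : T -> T) (c1 c2 : coloring T) : forall n phi (l1 l2 : labeling T), is_FO phi ->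
  (forall i v, l1 i = Some v -> v \in verts G1) ->
  (forall i S, c1 i = Some S -> S \subset verts G1) ->
  triplet_iso G1 l1 c1 G2 l2 c2 f -> (satn n G1 l1 c1 phi <-> satn n G2 l2 c2 phi).
Proof.
elim=> [//|n IH] phi l1 l2 HF Hl Hc Hiso.
have Hiso' := Hiso; move: Hiso' => [Hinj [Hv [Hadj [Hlab Hcol]]]].
case: phi HF => //= [i p|p r|p|a b|a b|a Y].
- move=> HF.
  have Hli : l1 i = None <-> l2 i = None.
    by move: (Hlab i); case: (l1 i); case: (l2 i).
  split=> -[Hi [v [Hv1 Hs]]]; (split; [by apply/Hli|]).
  + exists (f v); split; first by rewrite -Hv imset_f.
    apply/(IH _ (upd l1 i v)) ; last exact: Hs.
    * by rewrite isFO_substV.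
    * by move=> j w; rewrite /upd; case: (j == i) => [[H]|]; [subst; done|apply: Hl].
    * exact: Hc.
    * exact: iso_upd.
  + move: Hv1; rewrite -Hv => /imsetP[w Hw Hvw]; subst v.
    exists w; split=> //.
    apply/(IH _ (upd l1 i w)); last exact: Hs.
    * by rewrite isFO_substV.
    * by move=> j u; rewrite /upd; case: (j == i) => [[H]|]; [subst; done|apply: Hl].
    * exact: Hc.
    * exact: iso_upd.
- move=> /andP[Fp Fr]; rewrite (IH p l1 l2) // (IH r l1 l2) //.
- move=> Fp; rewrite (IH p l1 l2) //.
- case: a => // i; case: b => // j _; split.
  + move=> [x [y [Hx [Hy H]]]]; move: (Hlab i) (Hlab j); rewrite Hx Hy.
    case: (l2 i) => [a'|] //; case: (l2 j) => [b'|] // <- <-.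
    exists (f x), (f y); do 2 split=> //; rewrite Hadj //; [exact: Hl Hx|exact: Hl Hy].
  + move=> [x' [y' [Hx [Hy H]]]]; move: (Hlab i) (Hlab j); rewrite Hx Hy.
    case Ei: (l1 i) => [x|] //; case Ej: (l1 j) => [y|] // Hfx Hfy; subst.
    exists x, y; do 2 split=> //; rewrite -Hadj //; [exact: Hl Ei|exact: Hl Ej].
- case: a => // i; case: b => // j _; split.
  + move=> [x [y [Hx [Hy H]]]]; move: (Hlab i) (Hlab j); rewrite Hx Hy.
    case: (l2 i) => [a'|] //; case: (l2 j) => [b'|] // <- <-.
    by exists (f x), (f y); do 2 split=> //; rewrite H.
  + move=> [x' [y' [Hx [Hy H]]]]; move: (Hlab i) (Hlab j); rewrite Hx Hy.
    case Ei: (l1 i) => [x|] //; case Ej: (l1 j) => [y|] // Hfx Hfy; subst.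
    exists x, y; do 2 split=> //; apply: Hinj => //; [exact: Hl Ei|exact: Hl Ej].
- case: a => // i; case: Y => // j _; split.
  + move=> [x [S [Hx [HS H]]]]; move: (Hlab i) (Hcol j); rewrite Hx HS.
    case: (l2 i) => [a'|] //; case: (c2 j) => [S'|] // <- <-.
    by exists (f x), (f @: S); do 2 split=> //; rewrite imset_f.
  + move=> [x' [S' [Hx [HS H]]]]; move: (Hlab i) (Hcol j); rewrite Hx HS.
    case Ei: (l1 i) => [x|] //; case Ej: (c1 j) => [S|] // Hfx HfS; subst.
    exists x, S; do 2 split=> //; move: H => /imsetP[w Hw Hfw].
    have -> // : x = w.
    apply: Hinj => //; [exact: Hl Ei| exact: (subsetP (Hc _ _ Ej))].
Qed.

Theorem lemma12 (T : finType) (G : graph T) (l : labeling T) (c : coloring T)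
  (q : nat) (C : nat -> {set T}) (phi : formula) :
  triplet_ok G l c ->
  (forall i, i <= q -> C i \subset verts G) ->
  (forall i j, i <= q -> j <= q -> i != j -> [disjoint C i & C j]) ->
  (forall i j, i <= q -> j <= q -> i != j -> same_type G l c (C i) (C j)) ->
  (forall i v, l i = Some v -> v \notin C 0) ->
  is_FO phi -> prenex phi -> nquant phi = q ->
  (models G l c phi <-> models (gdel G (C 0)) l (restrict_col c (C 0)) phi).
Proof.
elim: q l C phi => [|q IH] l C phi Hok HCsub Hdisj Hst Hl0 HF HP HQ.
  have Qf : qfree phi by case: phi HF HP HQ.
  by apply: qf_del.
have Hq : ~~ qfree phi by apply/negP => /qfree_nquant; rewrite HQ.
have [i [p Ephi]] : exists i p, phi = ExV i p.
  case: phi HF HP HQ Hq => //=; [by move=> i p; exists i, p|by move=> p r _ ->|by move=> p _ ->].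
subst phi; move: HF HP HQ => /= HF HP [HQ].
set p' := substV i p.
have K : forall v, v \in verts G -> v \notin C 0 ->
    (models G (upd l i v) c p' <-> models (gdel G (C 0)) (upd l i v) (restrict_col c (C 0)) p').
  move=> v Hv Hv0.
  have [d [Hd1 [Hdq Hd]]] : exists d, 0 < d /\ d <= q.+1 /\
      forall k, k <= q.+1 -> k != d -> v \notin C k.
    case Hex: [exists k : 'I_q.+2, (0 < k) && (v \in C k)].
    - move/existsP: Hex => [k /andP[k0 vk]]; exists k; split=> //; split; first by rewrite -ltnS ltn_ord.
      move=> [|k'] Hk' Hkk'; first done.
      have Hkq : k <= q.+1 by rewrite -ltnS ltn_ord.
      have Hne : (k : nat) != k'.+1 by rewrite eq_sym.
      by rewrite (disjointFr (Hdisj k k'.+1 Hkq Hk' Hne) vk).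
    - exists q.+1; split=> //; split=> //.
      move=> [|k] Hk Hkd //; apply/negP => vk; move/negbT/negP: Hex; apply; apply/existsP.
      by exists (Ordinal (Hk : k.+1 < q.+2)); rewrite /= vk.
  pose g k := if k < d then k else k.+1.
  have Hg0 : g 0 = 0 by rewrite /g Hd1.
  have Hgq : forall k, k <= q -> g k <= q.+1.
    by move=> k Hk; rewrite /g; case: ltnP => H; lia.
  have Hgd : forall k, g k != d.
    by move=> k; rewrite /g; case: ltnP => H; apply/eqP; lia.
  have Hginj : forall k k', g k = g k' -> k = k'.
    by move=> k k'; rewrite /g; case: ltnP => H1; case: ltnP => H2; lia.
  have Hvg : forall k, k <= q -> v \notin C (g k).
    by move=> k Hk; apply: Hd; [apply: Hgq|apply: Hgd].
  have := IH (upd l i v) (fun k => C (g k)) p'.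
  rewrite /= Hg0; apply.
  - move: Hok => [Hl Hc]; split=> // j w; rewrite /upd; case: (j == i) => [[H]|]; [by subst|apply: Hl].
  - by move=> k Hk; apply: HCsub; apply: Hgq.
  - move=> k k' Hk Hk' Hkk'; apply: Hdisj; [exact: Hgq|exact: Hgq|].
    by apply/negP => /eqP /Hginj E; rewrite E eqxx in Hkk'.
  - move=> k k' Hk Hk' Hkk'.
    have [|f [Hiso [H1 [H2 Hfix]]]] := Hst (g k) (g k') (Hgq k Hk) (Hgq k' Hk').
      by apply/negP => /eqP /Hginj E; rewrite E eqxx in Hkk'.
    exists f; split=> //.
    have fv : f v = v.
      by apply: Hfix; rewrite in_setD in_setU negb_or !Hvg.
    by have := @iso_upd _ _ _ _ _ _ _ f i v Hiso; rewrite fv.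
  - move=> j w; rewrite /upd; case: (j == i) => [[H]|]; [by subst|apply: Hl0].
  - by rewrite /p' isFO_substV.
  - by rewrite /p' prenex_substV.
  - by rewrite /p' nquant_substV.
rewrite !models_ExV -/p'.
split.
- move=> [Hi [v [Hv Hs]]]; split=> //.
  case Hv0: (v \in C 0).
  + have [|f [Hiso [H1 [H2 Hfix]]]] := Hst 0 1 (leq0n _) (erefl : 1 <= q.+1); first by [].
    set w := f v.
    have Hw1 : w \in C 1 := H1 v Hv0.
    have Hwv : w \in verts G := subsetP (HCsub 1 erefl) _ Hw1.
    have Hw0 : w \notin C 0 by rewrite (disjointFl (Hdisj 0 1 _ _ _) Hw1).
    exists w; split; first by rewrite /= in_setD Hw0 Hwv.
    apply/K => //.
    have E : models G (upd l i v) c p' <-> models G (upd l i w) c p'.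
      apply: iso_sat.
      * by rewrite /p' isFO_substV.
      * move: Hok => [Hl _] j u; rewrite /upd; case: (j == i) => [[H]|]; [by subst|apply: Hl].
      * by case: Hok.
      * exact: (@iso_upd _ _ _ _ _ _ _ f i v Hiso).
    by apply/E.
  + exists v; split; first by rewrite /= in_setD Hv0 Hv.
    by apply/K => //; rewrite Hv0.
- move=> [Hi [v [Hv Hs]]]; split=> //.
  move: Hv; rewrite /= in_setD => /andP[Hv0 Hv].
  by exists v; split=> //; apply/K.
Qed.
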